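(* Let $\overrightarrow{W}$ be a Morse sequence on a simplicial complex $K$. Then $\overline\Phi_p=\widetilde\curlywedge_p\circ\curlywedge_p$ and $\underline\Phi_p=\widetilde\curlyvee_p\circ\curlyvee_p$ as maps $K[p]\to K[p]$, for every $p$.
   Context: A simplicial complex $K$ is a finite collection of non-empty finite sets closed under taking non-empty subsets; $\dim\sigma=|\sigma|-1$, $K^{(p)}$ the set of $p$-simplices. A pair $(\sigma,\tau)$ with $\sigma\subsetneq\tau$ is a free pair for $K$ if $\tau$ is the only simplex other than $\sigma$ containing $\sigma$; $K$ is then an elementary expansion of $K\setminus\{\sigma,\tau\}$. If $\nu$ is a facet (maximal simplex) of $K$, $K$ is an elementary filling of $K\setminus\{\nu\}$. A Morse sequence on $K$ is a sequence $\langle\emptyset=K_0,\dots,K_k=K\rangle$ with each $K_i$ an elementary expansion or filling of $K_{i-1}$; simplices added by fillings are critical; for an expansion $K_i=K_{i-1}\cup\{\sigma,\tau\}$, $\sigma\subset\tau$, $(\sigma,\tau)$ is a regular pair, $\sigma$ lower regular, $\tau$ upper regular. $\widehat W$ is the set of critical simplices. $K[p]$ is the $\mathbb{Z}_2$-vector space of subsets of $K^{(p)}$ (sum = symmetric difference, $0=\emptyset$), $\widehat W[p]=\{c\in K[p]:c\subseteq\widehat W\}$. For $\sigma\in K^{(p)}$, $\partial(\sigma)=\{\tau\in K^{(p-1)}:\tau\subset\sigma\}$, $\delta(\sigma)=\{\tau\in K^{(p+1)}:\sigma\subset\tau\}$, with linear extensions $\partial_p,\delta_p$. The reference map $\curlywedge$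 is the unique map assigning to each $p$-simplex an element of $\widehat W[p]$, with linear extension $\curlywedge_p$, such that $\curlywedge(\nu)=\{\nu\}$ for critical $\nu$ and $\curlywedge(\tau)=0=\curlywedge(\partial(\tau))$ for upper regular $\tau$; the coreference map $\curlyvee$ (linear extension $\curlyvee_p$) is the unique such map with $\curlyvee(\nu)=\{\nu\}$ for critical $\nu$ and $\curlyvee(\sigma)=0=\curlyvee(\delta(\sigma))$ for lower regular $\sigma$. Extension maps: $\widetilde\curlywedge_p,\widetilde\curlyvee_p:\widehat W[p]\to K[p]$ linear with $\widetilde\curlywedge(\kappa)=\{\nu\in K:\kappa\in\curlyvee(\nu)\}$, $\widetilde\curlyvee(\kappa)=\{\nu\in K:\kappa\in\curlywedge(\nu)\}$ for critical $\kappa$. Let $V_p:K[p]\to K[p+1]$ and $V^*_p:K[p]\to K[p-1]$ be the linear maps with $V(\kappa)=V^*(\kappa)=0$ for critical $\kappa$, and $V(\sigma)=\tau$, $V(\tau)=0$, $V^*(\sigma)=0$, $V^*(\tau)=\sigma$ for each regular pair $(\sigma,\tau)$. The gradient flow $\Phi_p:K[p]\to K[p]$ and coflow $\Phi^*_p:K[p]\to K[p]$ are the linear maps with $\Phi_p(\nu)=\nu+\partial_{p+1}(V_p(\nu))+V_{p-1}(\partial_p(\nu))$ and $\Phi^*_p(\nu)=\nu+\delta_{p-1}(V^*_p(\nu))+V^*_{p+1}(\delta_p(\nu))$ for $\nu\in K^{(p)}$. For each $c\in K[p]$ there are integers $i,j\ge0$ with $\Phi^{i+1}(c)=\Phi^i(c)$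 and $(\Phi^* )^{j+1}(c)=(\Phi^* )^j(c)$; one sets $\overline\Phi_p(c)=\Phi^i(c)$ and $\underline\Phi_p(c)=(\Phi^* )^j(c)$. *)

(* Defs.v *)
From mathcomp Require Import all_boot.
Set Implicit Arguments. Unset Strict Implicit. Unset Printing Implicit Defensive.

Section MorseDefs.
Variable V : finType.

Definition simplex := {set V}.
Definition cplx_t := {set {set V}}.

Definition is_complex (K : cplx_t) : Prop :=
  set0 \notin K /\
  (forall s t : {set V}, t \in K -> s \subset t -> s != set0 -> s \in K).

(* p-simplices: dim = |s| - 1 = p *)
Definition Kp (K : cplx_t) (p : nat) : cplx_t := [set s in K | #|s| == p.+1].

Definition free_pair (K : cplx_t) (s t : {set V}) : Prop :=
  [/\ s \in K, t \in K, s \proper t &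
      forall r, r \in K -> s \subset r -> r != s -> r = t].

Definition facet (K : cplx_t) (n : {set V}) : Prop :=
  n \in K /\ forall r, r \in K -> n \subset r -> r = n.

(* a step of a Morse sequence: inl n = filling by the critical simplex n,
   inr (s, t) = elementary expansion by the regular pair (s, t) *)
Definition step := ({set V} + ({set V} * {set V}))%type.

Definition added (x : step) : cplx_t :=
  match x with inl n => [set n] | inr (s, t) => [set s; t] end.

Definition cplx_of (w : seq step) : cplx_t := \bigcup_(x <- w) added x.

Definition valid_step (Kprev : cplx_t) (x : step) : Prop :=
  is_complex (Kprev :|: added x) /\
  match x with
  | inl n => n \notin Kprev /\ facet (Kprev :|: added x) n
  | inr (s, t) => [/\ s \notin Kprev, t \notin Kprev &
                     free_pair (Kprev :|: added x) s t]
  end.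

Fixpoint valid_from (Kprev : cplx_t) (w : seq step) : Prop :=
  match w with
  | [::] => True
  | x :: w' => valid_step Kprev x /\ valid_from (Kprev :|: added x) w'
  end.

Definition morse_seq (K : cplx_t) (w : seq step) : Prop :=
  valid_from set0 w /\ cplx_of w = K.

Definition crit (w : seq step) : cplx_t := [set n | inl n \in w].

(* Z_2-linear extension of a map on simplices to chains (sets of simplices) *)
Definition lin (f : {set V} -> cplx_t) (c : cplx_t) : cplx_t :=
  [set y | odd #|[set x in c | y \in f x]|].

Definition sdiff (A B : cplx_t) : cplx_t := (A :\: B) :|: (B :\: A).

Definition bd (K : cplx_t) (n : {set V}) : cplx_t :=
  [set t in K | (t \subset n) && (#|t|.+1 == #|n|)].
Definition cobd (K : cplx_t) (n : {set V}) : cplx_t :=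
  [set t in K | (n \subset t) && (#|t| == #|n|.+1)].

Definition Vm (w : seq step) (n : {set V}) : cplx_t := [set t | inr (n, t) \in w].
Definition Vs (w : seq step) (n : {set V}) : cplx_t := [set s | inr (s, n) \in w].

Definition Phi (K : cplx_t) (w : seq step) : cplx_t -> cplx_t :=
  lin (fun n => sdiff (sdiff [set n] (lin (bd K) (Vm w n))) (lin (Vm w) (bd K n))).
Definition Phis (K : cplx_t) (w : seq step) : cplx_t -> cplx_t :=
  lin (fun n => sdiff (sdiff [set n] (lin (cobd K) (Vs w n))) (lin (Vs w) (cobd K n))).

Definition is_reference (K : cplx_t) (w : seq step) (f : {set V} -> cplx_t) : Prop :=
  [/\ forall n, n \in K -> f n \subset [set k in crit w | #|k| == #|n|],
      forall n, n \in crit w -> f n = [set n] &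
      forall s t, inr (s, t) \in w -> f t = set0 /\ lin f (bd K t) = set0].

Definition is_coreference (K : cplx_t) (w : seq step) (g : {set V} -> cplx_t) : Prop :=
  [/\ forall n, n \in K -> g n \subset [set k in crit w | #|k| == #|n|],
      forall n, n \in crit w -> g n = [set n] &
      forall s t, inr (s, t) \in w -> g s = set0 /\ lin g (cobd K s) = set0].

Definition ext (K : cplx_t) (h : {set V} -> cplx_t) (k : {set V}) : cplx_t :=
  [set n in K | k \in h n].

(* "F-bar(c) = d": the iterates of F on c stabilise (some i with
   F^{i+1} c = F^i c), and F^i c = d for every such i *)
Definition stable_limit (F : cplx_t -> cplx_t) (c d : cplx_t) : Prop :=
  (exists i, iter i.+1 F c = iter i F c) /\
  (forall i, iter i.+1 F c = iter i F c -> iter i F c = d).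

End MorseDefs.

(* Main.v *)
Require Import Defs.
From mathcomp Require Import all_boot all_algebra zify.
Set Implicit Arguments. Unset Strict Implicit. Unset Printing Implicit Defensive.
Import GRing.Theory.
Section AlgS.
Local Open Scope ring_scope.

Section RingAlg.
Variable R : pzRingType.
Implicit Types A P N F : R.

Definition Bsum N t := \sum_(i < t) N ^+ i.

Lemma Bsum_inv N m : N ^+ m = 0 -> (1 - N) * Bsum N m = 1.
Proof.
move=> Hm; have := subrX1 N m; rewrite Hm sub0r => H.
by rewrite -opprB mulNr -H opprK.
Qed.

Lemma F_form A P N F m : A = P + N -> N ^+ m = 0 -> F * A = F -> F * P = P ->
  F = P * Bsum N m.
Proof.
move=> HA Hm HF HP.
have HN : N = A - P by rewrite HA addrC addKr.
have : F * (1 - N) = P by rewrite mulrBr mulr1 HN mulrBr HF HP opprB addrC subrK.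
by move=> <-; rewrite -mulrA Bsum_inv // mulr1.
Qed.

Lemma ABP A P N : A = P + N -> P * P = P -> (forall a, P * N ^+ a.+1 * P = 0) ->
  forall t, A * Bsum N t.+1 * P = Bsum N t.+2 * P.
Proof.
move=> HA HP HPN t.
rewrite /Bsum -mulrA !mulr_suml mulr_sumr [in RHS]big_ord_recl expr0 mul1r HA.
under eq_bigr => i _ do rewrite mulrDl.
rewrite big_split /= big_ord_recl /= expr0 mul1r HP big1 ?addr0; last first.
  by move=> i _; rewrite mulrA HPN.
congr (_ + _); apply: eq_bigr => i _; by rewrite exprS mulrA.
Qed.

Lemma Apow A P N : A = P + N -> P * P = P -> (forall a, P * N ^+ a.+1 * P = 0) ->
  forall k, A ^+ k = \sum_(j < k) Bsum N (k - j) * P * N ^+ j + N ^+ k.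
Proof.
move=> HA HP HPN; elim=> [|k IH]; first by rewrite big_ord0 add0r !expr0.
rewrite exprS IH mulrDr mulr_sumr big_ord_recr /= -addrA.
congr (_ + _).
  apply: eq_bigr => j _; have Hj := ltn_ord j.
  rewrite !mulrA -[in LHS](subnSK Hj) ABP //.
  by rewrite subSn ?(ltnW Hj) // subnSK.
rewrite subSnn /Bsum big_ord1 expr0 mul1r HA mulrDl exprS; by [].
Qed.

Lemma Bsum_ge N m t : N ^+ m = 0 -> (m <= t)%N -> Bsum N t = Bsum N m.
Proof.
move=> Hm; elim: t => [|t IH]; first by rewrite leqn0 => /eqP ->.
rewrite leq_eqVlt => /orP [/eqP <-|Hlt] //.
have Hle : (m <= t)%N by [].
rewrite /Bsum big_ord_recr /= -/(Bsum N t) IH // .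
have -> : N ^+ t = 0 by rewrite -(subnKC Hle) exprD Hm mul0r.
by rewrite addr0.
Qed.

Lemma Alim A P N m : A = P + N -> P * P = P -> (forall a, P * N ^+ a.+1 * P = 0) ->
  N ^+ m = 0 -> forall k, (m + m <= k)%N -> A ^+ k = Bsum N m * P * Bsum N m.
Proof.
move=> HA HP HPN Hm k Hk.
have Hmk : (m <= k)%N by lia.
rewrite (Apow HA HP HPN k).
have -> : N ^+ k = 0 by rewrite -(subnKC Hmk) exprD Hm mul0r.
rewrite addr0.
have E : \sum_(j < m) Bsum N m * P * N ^+ j = Bsum N m * P * Bsum N m.
  by rewrite -mulr_sumr.
rewrite -E (big_ord_widen k (fun j => Bsum N m * P * N ^+ j) Hmk) [RHS]big_mkcond /=.
apply: eq_bigr => j _; case: ifP => Hj.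
  by rewrite (Bsum_ge Hm) //; lia.
move/negbT: Hj; rewrite -leqNgt => Hmj.
have -> : N ^+ j = 0 by rewrite -(subnKC Hmj) exprD Hm mul0r.
by rewrite mulr0.
Qed.

End RingAlg.

Lemma trX n (M : 'M['F_2]_n) i : (M ^+ i)^T = (M^T) ^+ i.
Proof.
elim: i => [|i IH]; first by rewrite !expr0 trmx1.
by rewrite exprS -mulmxE trmx_mul IH mulmxE -exprSr.
Qed.

Lemma trBsum n (M : 'M['F_2]_n) m : (Bsum M m)^T = Bsum M^T m.
Proof.
elim: m => [|m IH]; first by rewrite /Bsum !big_ord0 trmx0.
rewrite /Bsum !big_ord_recr /= linearD /= -!/(Bsum _ m) IH trX.
by [].
Qed.

Lemma alg (n : nat) (A As P N F G : 'M['F_2]_n) (m : nat) :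
  A = P + N -> As = A^T -> P^T = P -> P * P = P -> N ^+ m = 0 ->
  (forall a, P * N ^+ a.+1 * P = 0) ->
  F * A = F -> F * P = P -> G * As = G -> G * P = P ->
  forall k, (m + m <= k)%N -> A ^+ k = G^T * F.
Proof.
move=> HA HAs HPt HP Hm HPN HFA HFP HGA HGP k Hk.
rewrite (Alim HA HP HPN Hm Hk).
have HAs' : As = P + N^T.
  by rewrite HAs HA linearD /= HPt.
have HmT : (N^T) ^+ m = 0 by rewrite -trX Hm linear0.
rewrite (F_form HA Hm HFA HFP) (F_form HAs' HmT HGA HGP).
have -> : (P * Bsum N^T m)^T = (Bsum N^T m)^T * P^T.
  by rewrite -!mulmxE trmx_mul.
rewrite HPt trBsum trmxK.
by rewrite [RHS]mulrA -[Bsum N m * P * P]mulrA HP.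
Qed.
End AlgS.

Section Bridge.
Variable V : finType.
Local Notation X := {set V}.
Local Notation n := #|{: X}|.
Local Open Scope ring_scope.

Definition ev (i : 'I_n) : X := enum_val i.
Definition b2 (b : bool) : 'F_2 := b%:R.

Lemma F2_11 : (1 + 1 : 'F_2) = 0. Proof. by apply/eqP. Qed.

Lemma b2_odd k : b2 (odd k) = k%:R.
Proof.
rewrite /b2; elim: k => // k IH.
rewrite -(addn1 k) natrD -IH oddD /=; case: (odd k) => /=.
  by apply/eqP. by rewrite add0r.
Qed.

Lemma b2_addb a b : b2 (a (+) b) = b2 a + b2 b.
Proof. by case: a; case: b; rewrite /b2 /= ?addr0 ?add0r ?F2_11. Qed.

Lemma b2_inj a b : b2 a = b2 b -> a = b.
Proof.
case: a; case: b; rewrite /b2 //= => /eqP; rewrite ?oner_eq0 ?(eq_sym 0) ?oner_eq0 //.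
Qed.

Definition mat (F : X -> {set X}) : 'M['F_2]_n := \matrix_(i, j) b2 (ev i \in F (ev j)).
Definition vec (c : {set X}) : 'cV['F_2]_n := \col_i b2 (ev i \in c).

Lemma sum_ev (h : X -> 'F_2) : \sum_(j < n) h (ev j) = \sum_x h x.
Proof. by rewrite -(big_enum_val (A := X)) /=; apply: eq_bigl. Qed.

Lemma lin_core (F : X -> {set X}) (c : {set X}) (y : X) :
  \sum_x b2 (y \in F x) * b2 (x \in c) = b2 (y \in lin F c).
Proof.
rewrite inE b2_odd -sum1_card natr_sum [RHS]big_mkcond /=.
apply: eq_bigr => x _; rewrite inE.
by case: (x \in c); case: (y \in F x); rewrite /b2 ?mulr1 ?mulr0.
Qed.

Lemma vec_lin (F : X -> {set X}) (c : {set X}) : vec (lin F c) = mat F *m vec c.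
Proof.
apply/colP => i; rewrite !mxE -lin_core -sum_ev.
by apply: eq_bigr => j _; rewrite !mxE.
Qed.

Lemma mat_mul (F G : X -> {set X}) : mat F *m mat G = mat (fun x => lin F (G x)).
Proof.
apply/matrixP => i j; rewrite !mxE -lin_core -sum_ev.
by apply: eq_bigr => k _; rewrite !mxE.
Qed.

Lemma vec_inj (c d : {set X}) : vec c = vec d -> c = d.
Proof.
move=> H; apply/setP => x.
have := congr1 (fun v : 'cV_n => v (enum_rank x) 0) H.
by rewrite !mxE /ev enum_rankK => /b2_inj.
Qed.

Lemma mat_inj (F G : X -> {set X}) : mat F = mat G -> forall x, F x = G x.
Proof.
move=> H x; apply/setP => y.
have := congr1 (fun v : 'M_n => v (enum_rank y) (enum_rank x)) H.
by rewrite !mxE /ev !enum_rankK => /b2_inj.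
Qed.

Lemma in_sdiff (A B : {set X}) y : (y \in sdiff A B) = (y \in A) (+) (y \in B).
Proof. by rewrite /sdiff !inE; case: (y \in A); case: (y \in B). Qed.

Lemma mat_sdiff (F G : X -> {set X}) : mat (fun x => sdiff (F x) (G x)) = mat F + mat G.
Proof. by apply/matrixP => i j; rewrite !mxE in_sdiff b2_addb. Qed.

Lemma vec_sdiff (A B : {set X}) : vec (sdiff A B) = vec A + vec B.
Proof. by apply/colP => i; rewrite !mxE in_sdiff b2_addb. Qed.

Lemma mat_tr (F : X -> {set X}) : (mat F)^T = mat (fun y => [set x | y \in F x]).
Proof. by apply/matrixP => i j; rewrite !mxE inE. Qed.

Lemma mat1 : mat (fun x => [set x]) = 1%:M.
Proof.
apply/matrixP => i j; rewrite !mxE inE /ev.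
by rewrite (inj_eq enum_val_inj).
Qed.

Lemma mat0 : mat (fun _ : X => set0) = 0.
Proof. by apply/matrixP => i j; rewrite !mxE inE. Qed.

Lemma lin_comp (F G : X -> {set X}) (c : {set X}) : lin F (lin G c) = lin (fun x => lin F (G x)) c.
Proof. by apply: vec_inj; rewrite !vec_lin mulmxA mat_mul. Qed.

Lemma lin_sdiff (F : X -> {set X}) (A B : {set X}) : lin F (sdiff A B) = sdiff (lin F A) (lin F B).
Proof. by apply: vec_inj; rewrite vec_lin !vec_sdiff mulmxDr !vec_lin. Qed.

Lemma lin_set1 (F : X -> {set X}) (x : X) : lin F [set x] = F x.
Proof.
apply/setP => y; rewrite inE.
have -> : [set z in [set x] | y \in F z] = if y \in F x then [set x] else set0.
  apply/setP => z; rewrite !inE; have [->|ne] := eqVneq z x; by case: (y \in F x); rewrite ?inE ?eqxx ?(negbTE ne).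
by case: (y \in F x); rewrite ?cards1 ?cards0.
Qed.

Lemma lin_ext (F G : X -> {set X}) (c : {set X}) : {in c, F =1 G} -> lin F c = lin G c.
Proof.
move=> H; apply/setP => y; rewrite !inE.
suff -> : [set x in c | y \in F x] = [set x in c | y \in G x] by [].
by apply/setP => x; rewrite !inE; case Hx: (x \in c) => //=; rewrite H.
Qed.

Lemma lin_eq0 (F : X -> {set X}) (c : {set X}) : {in c, forall x, F x = set0} -> lin F c = set0.
Proof.
move=> H; apply/setP => y; rewrite !inE.
have -> : [set x in c | y \in F x] = set0.
  by apply/setP => x; rewrite !inE; case Hx: (x \in c) => //=; rewrite H ?inE.
by rewrite cards0.
Qed.

Lemma lin0 (F : X -> {set X}) : lin F set0 = set0.
Proof. by apply: lin_eq0 => x; rewrite inE. Qed.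

Lemma lin_mem (F : X -> {set X}) (c : {set X}) (y : X) : y \in lin F c -> exists2 x, x \in c & y \in F x.
Proof.
rewrite inE => Ho; case: (set_0Vmem [set x in c | y \in F x]) => [E|[x]].
  by rewrite E cards0 in Ho.
by rewrite inE => /andP [] ? ?; exists x.
Qed.

Lemma sdiff0 (A : {set X}) : sdiff A set0 = A.
Proof. by apply/setP => y; rewrite in_sdiff inE addbF. Qed.

End Bridge.

Section Comb.
Variable V : finType.
Local Notation X := {set V}.

Lemma in_cplx (s : seq (step V)) (x : X) :
  reflect (exists2 st, st \in s & x \in added st) (x \in cplx_of s).
Proof.
rewrite /cplx_of; elim: s => [|st s IH].
  by rewrite big_nil inE; constructor => -[].
rewrite big_cons inE; apply: (iffP orP).
  case=> [H|/IH [st' H1 H2]]; first by exists st; rewrite ?mem_head.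
  by exists st'; rewrite // inE H1 orbT.
case=> st' ; rewrite inE => /orP [/eqP -> H|H1 H2]; first by left.
by right; apply/IH; exists st'.
Qed.

Definition d0 : step V := inl set0.

Lemma valid_nth (Kp : {set X}) (w : seq (step V)) : valid_from Kp w ->
  forall i, i < size w -> valid_step (Kp :|: cplx_of (take i w)) (nth d0 w i).
Proof.
elim: w Kp => [//|x w IH] Kp /= [H1 H2] [|i] /= Hi.
  by rewrite /cplx_of big_nil setU0.
have := IH _ H2 i Hi; congr valid_step.
by rewrite /cplx_of big_cons setUA.
Qed.

Variables (K : {set X}) (w : seq (step V)).
Hypothesis HK : is_complex K.
Hypothesis Hw : morse_seq K w.

Definition idx (x : X) := find (fun st => x \in added st) w.
Definition KK i := cplx_of (take i w).

Lemma vstep i : i < size w -> valid_step (KK i) (nth d0 w i).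
Proof. move=> Hi; have := valid_nth Hw.1 Hi; by rewrite set0U. Qed.

Lemma fresh i x : i < size w -> x \in added (nth d0 w i) -> x \notin KK i.
Proof.
move=> Hi; have [_] := vstep Hi; case: (nth d0 w i) => [n|[s t]] /=.
  by move=> [Hn _]; rewrite inE => /eqP ->.
by move=> [Hs Ht _]; rewrite !inE => /orP [] /eqP ->.
Qed.

Lemma old j i x : j < i -> i < size w -> x \in added (nth d0 w j) -> x \in KK i.
Proof.
move=> Hj Hi Hx; apply/in_cplx; exists (nth d0 w j) => //.
have Hjs := ltn_trans Hj Hi.
rewrite in_take ?mem_nth //.
exact: (leq_ltn_trans (index_nth _ Hjs) Hj).
Qed.

Lemma KK_mem i x : x \in KK i -> exists2 j, j < i & x \in added (nth d0 w j).
Proof.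
move=> /in_cplx [st Hst Hx]; exists (index st w); first exact: index_ltn.
by rewrite nth_index // (mem_take Hst).
Qed.

Lemma idx_eq i x : i < size w -> x \in added (nth d0 w i) -> idx x = i.
Proof.
move=> Hi Hx.
have Hh : has (fun st => x \in added st) w by apply/(has_nthP d0); exists i.
case: (ltngtP (idx x) i) => // H.
  have := old H Hi (nth_find d0 Hh). by rewrite (negbTE (fresh Hi Hx)).
by have := before_find d0 H; rewrite Hx.
Qed.

Lemma idx_st st x : st \in w -> x \in added st -> idx x = index st w.
Proof. by move=> Hst Hx; apply: idx_eq; rewrite ?index_mem ?nth_index. Qed.

Lemma KE : K = cplx_of w. Proof. by rewrite Hw.2. Qed.

Lemma added_K st x : st \in w -> x \in added st -> x \in K.
Proof. by move=> H1 H2; rewrite KE; apply/in_cplx; exists st. Qed.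

Lemma inK_idx x : x \in K -> idx x < size w /\ x \in added (nth d0 w (idx x)).
Proof.
rewrite KE => /in_cplx [st Hst Hx].
have Hh : has (fun st => x \in added st) w.
  by apply/hasP; exists st.
by split; [rewrite /idx -has_find | exact: (nth_find d0 Hh)].
Qed.

Lemma same_step (st1 st2 : step V) (x : X) : st1 \in w -> st2 \in w ->
  x \in added st1 -> x \in added st2 -> st1 = st2.
Proof.
move=> H1 H2 X1 X2; have E1 := idx_st H1 X1; have E2 := idx_st H2 X2.
by rewrite -(nth_index d0 H1) -(nth_index d0 H2) -E1 -E2.
Qed.

Lemma face_idx (x z : X) : x \in K -> z \subset x -> z != set0 ->
  z \in K /\ (idx z < idx x \/ z \in added (nth d0 w (idx x))).
Proof.
move=> Hx Hzx Hz0; have [Hi Hxa] := inK_idx Hx.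
have [[_ Hcl] _] := vstep Hi.
have : z \in KK (idx x) :|: added (nth d0 w (idx x)).
  by apply: Hcl Hzx Hz0; rewrite inE Hxa orbT.
rewrite inE => /orP [/KK_mem [j Hj Hzj]|Hza].
  have Hjs := ltn_trans Hj Hi.
  by rewrite (idx_eq Hjs Hzj); split; [apply: added_K Hzj; exact: mem_nth | left].
by split; [apply: added_K Hza; exact: mem_nth | right].
Qed.

Lemma pair_prop (s t : X) : inr (s, t) \in w ->
  [/\ s \in K, t \in K, s \subset t, #|t| = #|s|.+1 & s != t].
Proof.
move=> Hst.
have Hs : s \in K by apply: added_K Hst _; rewrite /= !inE eqxx.
have Ht : t \in K by apply: added_K Hst _; rewrite /= !inE eqxx orbT.
have Hi : index (inr (s, t)) w < size w by rewrite index_mem.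
have := vstep Hi; rewrite nth_index //= => -[[_ Hcl] [_ _ [Hs' Ht' Hpr Hfree]]].
have /properP [Hsub [v Hvt Hvs]] := Hpr.
have Hr : v |: s = t.
  apply: Hfree.
  - apply: Hcl Ht' _ _; first by rewrite subUset sub1set Hvt Hsub.
    by apply/set0Pn; exists v; rewrite !inE eqxx.
  - exact: subsetUr.
  - by apply/eqP => E; move: Hvs; rewrite -E !inE eqxx.
split=> //; first by rewrite -Hr cardsU1 Hvs.
by apply/eqP => E; move: Hvs; rewrite E Hvt.
Qed.


Definition phi (x : X) : {set X} :=
  sdiff (sdiff [set x] (lin (bd K) (Vm w x))) (lin (Vm w) (bd K x)).
Definition phis (x : X) : {set X} :=
  sdiff (sdiff [set x] (lin (cobd K) (Vs w x))) (lin (Vs w) (cobd K x)).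
Definition rK (F : X -> {set X}) (x : X) := if x \in K then F x else set0.
Definition pk (x : X) : {set X} := if x \in crit w then [set x] else set0.
Definition nk (x : X) := sdiff (rK phi x) (pk x).
Definition up (y : X) := [exists s : X, inr (s, y) \in w].

Lemma crit_K x : x \in crit w -> x \in K.
Proof. by rewrite inE => H; apply: added_K H _; rewrite /= inE. Qed.

Lemma cr_nlo (x t : X) : inl x \in w -> inr (x, t) \in w -> False.
Proof.
move=> H1 H2; have := same_step H1 H2 (x := x).
by rewrite /= !inE eqxx => /(_ isT isT).
Qed.

Lemma cr_nup (x s : X) : inl x \in w -> inr (s, x) \in w -> False.
Proof.
move=> H1 H2; have := same_step H1 H2 (x := x).
by rewrite /= !inE eqxx orbT => /(_ isT isT).
Qed.

Lemma up_nlo (x s t : X) : inr (s, x) \in w -> inr (x, t) \in w -> False.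
Proof.
move=> H1 H2; have := same_step H1 H2 (x := x).
rewrite /= !inE !eqxx orbT => /(_ isT isT) [E1 E2].
have [_ _ _ _] := pair_prop H1; by rewrite E1 eqxx.
Qed.

Lemma Vm_lo (x t : X) : inr (x, t) \in w -> Vm w x = [set t].
Proof.
move=> H; apply/setP => t'; rewrite !inE; apply/idP/eqP => [H'|->] //.
have := same_step H' H (x := x); rewrite /= !inE !eqxx => /(_ isT isT).
by case.
Qed.

Lemma Vm_nlo (x : X) : (forall t, inr (x, t) \in w -> False) -> Vm w x = set0.
Proof. by move=> H; apply/setP => t; rewrite !inE; apply/negP => /H. Qed.

Lemma bd_ne0 x y : y \in bd K x -> y != set0.
Proof. by rewrite inE => /andP [Hy _]; apply/eqP => E; move: Hy; rewrite E; case: HK => /negP. Qed.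

Lemma L2_mem (x y : X) : x \in K -> y \in lin (Vm w) (bd K x) ->
  (exists z, inr (z, y) \in w) /\ (idx y < idx x \/ y = x).
Proof.
move=> Hx /lin_mem [z Hz]; rewrite inE => Hzy; split; first by exists z.
have Hz0 := bd_ne0 Hz.
move: Hz; rewrite inE => /andP [HzK /andP [Hzx /eqP Hc]].
have Eyz : idx y = idx z.
  by rewrite (idx_st Hzy) ?(idx_st Hzy (x := z)) //= !inE eqxx ?orbT.
have [_ [Hlt|Hza]] := face_idx Hx Hzx Hz0; first by left; rewrite Eyz.
have [Hi Hxa] := inK_idx Hx.
have E := same_step (mem_nth d0 Hi) Hzy Hza; rewrite /= !inE eqxx in E.
move: Hxa; rewrite (E isT) /= !inE => /orP [/eqP Exz|/eqP ->]; last by right.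
by move: Hc; rewrite Exz => /eqP; rewrite eqn_leq ltnn.
Qed.

Lemma in_phi (x y : X) : y \in phi x =
  (y == x) (+) (y \in lin (bd K) (Vm w x)) (+) (y \in lin (Vm w) (bd K x)).
Proof. by rewrite /phi !in_sdiff inE. Qed.

Lemma NK (x y : X) : y \in nk x ->
  idx y < idx x /\ ((x \in crit w) || up x -> up y).
Proof.
rewrite /nk /rK /pk in_sdiff.
case HxK: (x \in K); last first.
  by case: ifP => [/crit_K|]; rewrite ?HxK ?inE.
rewrite in_phi.
case Hcr: (x \in crit w).
  have Hcr' : inl x \in w by move: Hcr; rewrite inE.
  rewrite Vm_nlo; last by move=> t; apply: cr_nlo Hcr'.
  rewrite lin0 inE in_set1 => H.
  have : y \in lin (Vm w) (bd K x) by move: H; case: (y == x); case: (y \in lin _ _).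
  move=> /(L2_mem HxK).
  move=> [[z Hz] [Hlt|Ey]]; last by move: Hz; rewrite Ey => /(cr_nup Hcr').
  by split=> // _; apply/existsP; exists z.
rewrite in_set0 addbF /=.
case Hup: (up x).
  have /existsP [s Hs] := Hup.
  rewrite Vm_nlo; last by move=> t; apply: up_nlo Hs.
  rewrite lin0 in_set0 addbF.
  have HxL : x \in lin (Vm w) (bd K x).
    rewrite inE.
    have -> : [set z in bd K x | x \in Vm w z] = [set s].
      apply/setP => z; rewrite !inE; apply/idP/eqP => [/andP [_ Hz]|->].
        by have := same_step Hz Hs (x := x); rewrite /= !inE eqxx !orbT => /(_ isT isT) [].
      have [Hs' Hx' Hsub Hc _] := pair_prop Hs.
      by rewrite Hs' Hsub Hc eqxx Hs.
    by rewrite cards1.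
  case: eqP => [->|Hne]; first by rewrite HxL.
  move=> /(L2_mem HxK) [[z Hz] [Hlt|Ey]] //.
  by split=> // _; apply/existsP; exists z.
move=> H; split; last by [].
have Hlo : exists t, inr (x, t) \in w.
  have [Hi Hxa] := inK_idx HxK.
  move: Hxa (mem_nth d0 Hi); case: (nth d0 w (idx x)) => [n|[s t]] /=.
    by rewrite inE => /eqP <- Hn; move: Hcr; rewrite inE Hn.
  rewrite !inE => /orP [/eqP <-|/eqP <-] Hst; first by exists t.
  by case/negP: (negbT Hup); apply/existsP; exists s.
have [t Ht] := Hlo.
have [HxK' HtK Hxt Hc Hne] := pair_prop Ht.
move: H; rewrite (Vm_lo Ht) lin_set1.
case HL2: (y \in lin (Vm w) (bd K x)).
  move: HL2 => /(L2_mem HxK) [[z Hz] [Hlt|Ey]] // _.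
  by move: Hz; rewrite Ey => /up_nlo /(_ Ht).
rewrite addbF.
have Hxb : x \in bd K t by rewrite inE HxK' Hxt Hc eqxx.
case: eqP => [->|Hyx]; first by rewrite Hxb.
move=> /= Hyb.
have Hy0 := bd_ne0 Hyb.
move: Hyb; rewrite inE => /andP [HyK /andP [Hyt /eqP Hyc]].
have Ext : idx t = idx x.
  by rewrite (idx_st Ht (x := t)) ?(idx_st Ht (x := x)) //= !inE eqxx ?orbT.
have [_ [Hlt|Hya]] := face_idx HtK Hyt Hy0; first by rewrite -Ext.
have [Hi Hta] := inK_idx HtK.
have E := same_step (mem_nth d0 Hi) Ht Hta; rewrite /= !inE eqxx orbT in E.
move: Hya; rewrite (E isT) /= !inE => /orP [/eqP //|/eqP Eyt].
by move: Hyc; rewrite Eyt => /eqP; rewrite eqn_leq ltnn.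
Qed.


Variables (f g : X -> {set X}).
Hypothesis Hf : is_reference K w f.
Hypothesis Hg : is_coreference K w g.
Local Open Scope ring_scope.

Lemma eq_mat (F G : X -> {set X}) : (forall x, F x = G x) -> mat F = mat G.
Proof. by move=> H; apply/matrixP => i j; rewrite !mxE H. Qed.

Lemma mat_ne0 (F : X -> {set X}) i j : mat F i j != 0 -> ev i \in F (ev j).
Proof. by rewrite mxE /b2; case: (ev i \in F (ev j)) => //; rewrite eqxx. Qed.

Lemma mul_ne0 (M1 M2 : 'M['F_2]_#|{: X}|) i j : (M1 * M2) i j != 0 ->
  exists k, M1 i k != 0 /\ M2 k j != 0.
Proof.
rewrite -mulmxE mxE => H.
case: (pickP (fun k => (M1 i k != 0) && (M2 k j != 0))) => [k /andP [H1 H2]|H0].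
  by exists k.
move: H; rewrite big1 ?eqxx // => k _.
have := H0 k; case: (M1 i k =P 0) => [->|_] /=; first by rewrite mul0r.
by move/negbFE/eqP ->; rewrite mulr0.
Qed.

Lemma in_pk x y : (y \in pk x) = (x \in crit w) && (y == x).
Proof. by rewrite /pk; case: ifP; rewrite ?inE. Qed.

Lemma Npow a i j : (mat nk ^+ a) i j != 0 -> (idx (ev i) + a <= idx (ev j))%N.
Proof.
elim: a i j => [|a IH] i j.
  rewrite expr0 mxE; have [-> _|ne] := eqVneq i j; first by rewrite addn0.
  by rewrite mulr0n eqxx.
rewrite exprS => /mul_ne0 [k [H1 H2]].
have [Hlt _] := NK (mat_ne0 H1); have := IH _ _ H2.
move: Hlt; rewrite addnS; move: (idx (ev i)) (idx (ev k)) (idx (ev j)) => u v z.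
move=> H3 H4; apply: leq_trans H4; by rewrite ltn_add2r.
Qed.

Lemma Nnil : mat nk ^+ (size w).+1 = 0.
Proof.
apply/matrixP => i j; rewrite [RHS]mxE; apply/eqP; apply: contraT => /Npow.
have := find_size (fun st => ev j \in added st) w; rewrite -/(idx (ev j)).
move: (idx (ev i)) (idx (ev j)) => u v H1 H2.
have := leq_trans H2 H1; by rewrite addnS ltnNge leq_addl.
Qed.

Lemma NPup a i j : (mat nk ^+ a.+1 * mat pk) i j != 0 -> up (ev i).
Proof.
elim: a i j => [|a IH] i j.
  rewrite expr1 => /mul_ne0 [k [H1 H2]].
  move: (mat_ne0 H2); rewrite in_pk => /andP [Hc /eqP Ekj].
  apply: (NK (mat_ne0 H1)).2; by rewrite -Ekj in Hc; rewrite Hc.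
rewrite exprS -mulrA => /mul_ne0 [k [H1 H2]].
by apply: (NK (mat_ne0 H1)).2; rewrite (IH _ _ H2) orbT.
Qed.

Lemma PNP a : mat pk * mat nk ^+ a.+1 * mat pk = 0.
Proof.
apply/matrixP => i j; rewrite [RHS]mxE; apply/eqP; apply: contraT.
rewrite -mulrA => /mul_ne0 [k [H1 H2]].
move: (mat_ne0 H1); rewrite in_pk => /andP [Hc /eqP Eik].
have /existsP [s Hs] := NPup H2.
by move: Hc; rewrite inE => /cr_nup /(_ Hs).
Qed.

Lemma A_PN : mat (rK phi) = mat pk + mat nk.
Proof.
rewrite -mat_sdiff; apply: eq_mat => x; apply/setP => y.
by rewrite /nk !in_sdiff; case: (y \in pk x); case: (y \in rK phi x).
Qed.

Lemma PT : (mat pk)^T = mat pk.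
Proof.
rewrite mat_tr; apply: eq_mat => y; apply/setP => x.
rewrite inE !in_pk eq_sym; by case: eqP => [->|_]; rewrite ?andbF.
Qed.

Lemma PP : mat pk * mat pk = mat pk.
Proof.
rewrite -mulmxE mat_mul; apply: eq_mat => x.
rewrite {2 3}/pk; case: ifP => H; rewrite ?lin0 // lin_set1 /pk H //.
Qed.

Lemma FA : mat (rK f) * mat (rK phi) = mat (rK f).
Proof.
rewrite -mulmxE mat_mul; apply: eq_mat => x.
rewrite [rK phi x]/rK [rK f x]/rK; case: ifP => Hx; last exact: lin0.
have [_ _ Hp] := Hf.
have E1 : lin (rK f) (lin (bd K) (Vm w x)) = set0.
  rewrite lin_comp; apply: lin_eq0 => t; rewrite inE => Ht.
  have [_ Hb] := Hp _ _ Ht.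
  rewrite -Hb; apply: lin_ext => z; rewrite inE /rK => /andP [-> _] //.
have E2 : lin (rK f) (lin (Vm w) (bd K x)) = set0.
  rewrite lin_comp; apply: lin_eq0 => z _; apply: lin_eq0 => t; rewrite inE => Ht.
  have [Hft _] := Hp _ _ Ht; rewrite /rK; by case: ifP.
by rewrite /phi !lin_sdiff lin_set1 E1 E2 !sdiff0 /rK Hx.
Qed.

Lemma FP : mat (rK f) * mat pk = mat pk.
Proof.
rewrite -mulmxE mat_mul; apply: eq_mat => x.
rewrite /pk; case: ifP => H; last exact: lin0.
rewrite lin_set1 /rK (crit_K H); have [_ Hc _] := Hf; exact: Hc.
Qed.

Lemma GAs : mat (rK g) * mat (rK phis) = mat (rK g).
Proof.
rewrite -mulmxE mat_mul; apply: eq_mat => x.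
rewrite [rK phis x]/rK [rK g x]/rK; case: ifP => Hx; last exact: lin0.
have [_ _ Hp] := Hg.
have E1 : lin (rK g) (lin (cobd K) (Vs w x)) = set0.
  rewrite lin_comp; apply: lin_eq0 => s; rewrite inE => Hs.
  have [_ Hb] := Hp _ _ Hs.
  rewrite -Hb; apply: lin_ext => z; rewrite inE /rK => /andP [-> _] //.
have E2 : lin (rK g) (lin (Vs w) (cobd K x)) = set0.
  rewrite lin_comp; apply: lin_eq0 => z _; apply: lin_eq0 => s; rewrite inE => Hs.
  have [Hgs _] := Hp _ _ Hs; rewrite /rK; by case: ifP.
by rewrite /phis !lin_sdiff lin_set1 E1 E2 !sdiff0 /rK Hx.
Qed.

Lemma GP : mat (rK g) * mat pk = mat pk.
Proof.
rewrite -mulmxE mat_mul; apply: eq_mat => x.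
rewrite /pk; case: ifP => H; last exact: lin0.
rewrite lin_set1 /rK (crit_K H); have [_ Hc _] := Hg; exact: Hc.
Qed.

Definition Em := mat (rK (fun x => [set x])).

Lemma lin_rK1 (c : {set X}) : lin (rK (fun x => [set x])) c = c :&: K.
Proof.
apply/setP => y; rewrite !inE.
have -> : [set x in c | y \in rK (fun x => [set x]) x] =
          if (y \in c) && (y \in K) then [set y] else set0.
  apply/setP => z; rewrite !inE /rK.
  have [->|ne] := eqVneq z y.
    by case: (y \in c); case: (y \in K); rewrite ?inE ?eqxx.
  case: ifP => _; case: ifP => _; rewrite ?inE ?andbF ?(negbTE ne) //.
  1-2: by rewrite eq_sym (negbTE ne) andbF.
by case: ifP => _; rewrite ?cards1 ?cards0.
Qed.

Lemma rK_mat (h : X -> {set X}) : mat (rK h) = mat h *m Em.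
Proof.
rewrite mat_mul; apply: eq_mat => x; rewrite /rK; case: ifP => _.
  by rewrite lin_set1. by rewrite lin0.
Qed.

Lemma ET : Em^T = Em.
Proof.
rewrite mat_tr; apply: eq_mat => y; apply/setP => x.
rewrite inE /rK; case Hx: (x \in K); case Hy: (y \in K); rewrite ?inE //.
- by apply/eqP => E; move: Hy; rewrite E Hx.
- by apply/esym/eqP => E; move: Hx; rewrite E Hy.
Qed.

Lemma Vs_K x s : s \in Vs w x -> s \in K /\ x \in K.
Proof.
rewrite inE => H; split; apply: added_K H _; by rewrite /= !inE eqxx ?orbT.
Qed.

Lemma VsE : mat (Vs w) *m Em = mat (Vs w).
Proof.
rewrite mat_mul; apply: eq_mat => x; rewrite /rK; case: ifP => Hx.
  by rewrite lin_set1.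
rewrite lin0; apply/esym/setP => s; rewrite in_set0; apply/negP => /Vs_K [_].
by rewrite Hx.
Qed.

Lemma EVs : Em *m mat (Vs w) = mat (Vs w).
Proof.
rewrite mat_mul; apply: eq_mat => x; rewrite lin_rK1.
by apply/setP => s; rewrite inE; case H: (s \in Vs w x); rewrite ?andbT //; case: (Vs_K H).
Qed.

Lemma VT : (mat (Vm w))^T = mat (Vs w).
Proof. by rewrite mat_tr; apply: eq_mat => y; apply/setP => x; rewrite !inE. Qed.

Lemma CE : mat (cobd K) *m Em = Em *m (mat (bd K))^T.
Proof.
rewrite mat_tr !mat_mul; apply: eq_mat => y; rewrite lin_rK1.
have -> : lin (cobd K) (rK (fun x => [set x]) y) = if y \in K then cobd K y else set0.
  by rewrite /rK; case: ifP; rewrite ?lin_set1 ?lin0.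
apply/setP => x; rewrite in_setI [x \in [set _ | _]]inE; case Hy: (y \in K).
  rewrite /cobd /bd !inE Hy [#|x| == _]eq_sym.
  by case: (x \in K); rewrite ?andbT ?andbF.
by rewrite in_set0 /bd inE Hy.
Qed.

Lemma phi_dec : mat phi = 1%:M + mat (bd K) *m mat (Vm w) + mat (Vm w) *m mat (bd K).
Proof. by rewrite !mat_mul -mat1 -!mat_sdiff. Qed.

Lemma phis_dec : mat phis = 1%:M + mat (cobd K) *m mat (Vs w) + mat (Vs w) *m mat (cobd K).
Proof. by rewrite !mat_mul -mat1 -!mat_sdiff. Qed.

Lemma AsT : mat (rK phis) = (mat (rK phi))^T.
Proof.
rewrite !rK_mat phi_dec phis_dec trmx_mul ET !linearD /= !trmx_mul trmx1 VT.
set B := mat (bd K); set C := mat (cobd K); set S := mat (Vs w).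
rewrite !mulmxDl mul1mx mulmx1.
have H1 : C *m S *m Em = Em *m (B^T *m S).
  by rewrite -mulmxA VsE -EVs mulmxA CE mulmxA.
have H2 : S *m C *m Em = Em *m (S *m B^T).
  by rewrite -mulmxA CE mulmxA VsE mulmxA EVs.
by rewrite H1 H2 addrAC.
Qed.

Lemma phi_K x : x \in K -> phi x \subset K.
Proof.
move=> Hx; apply/subsetP => y; rewrite in_phi.
case: eqP => [-> _ //|_] /=.
case H1: (y \in lin (bd K) (Vm w x)) => /=.
  by move: H1 => /lin_mem [t _]; rewrite inE => /andP [].
move=> /lin_mem [z _]; rewrite inE => Hz; apply: added_K Hz _.
by rewrite /= !inE eqxx orbT.
Qed.

Lemma phis_K x : x \in K -> phis x \subset K.
Proof.
move=> Hx; apply/subsetP => y; rewrite /phis !in_sdiff inE.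
case: eqP => [-> _ //|_] /=.
case H1: (y \in lin (cobd K) (Vs w x)) => /=.
  by move: H1 => /lin_mem [t _]; rewrite inE => /andP [].
by move=> /lin_mem [z _] /Vs_K [].
Qed.

Lemma iter_vec (h : X -> {set X}) : (forall x, x \in K -> h x \subset K) ->
  forall c : {set X}, c \subset K -> forall k,
  iter k (lin h) c \subset K /\ vec (iter k (lin h) c) = (mat (rK h)) ^+ k *m vec c.
Proof.
move=> Hh c Hc; elim=> [|k [Hs Hv]]; first by rewrite expr0 mul1mx.
have E : lin h (iter k (lin h) c) = lin (rK h) (iter k (lin h) c).
  by apply: lin_ext => x Hx; rewrite /rK (subsetP Hs _ Hx).
split; rewrite /= E.
  apply/subsetP => y /lin_mem [x _]; rewrite /rK; case: ifP => [HxK|].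
    by move/(subsetP (Hh _ HxK)).
  by rewrite inE.
by rewrite vec_lin Hv mulmxA mulmxE -exprS.
Qed.

Lemma limit (h : X -> {set X}) (M : 'M['F_2]_#|{: X}|) (c d : {set X}) k0 :
  (forall x, x \in K -> h x \subset K) -> c \subset K ->
  (forall k, (k0 <= k)%N -> (mat (rK h)) ^+ k = M) -> vec d = M *m vec c ->
  stable_limit (lin h) c d.
Proof.
move=> Hh Hc HM Hd; have Hv k := (iter_vec Hh Hc k).2.
split.
  exists k0; apply: vec_inj; by rewrite !Hv !HM.
move=> i Hi.
have Hij j : iter (i + j) (lin h) c = iter i (lin h) c.
  elim: j => [|j IH]; first by rewrite addn0.
  by rewrite addnS /= IH; exact: Hi.
apply: vec_inj; rewrite -(Hij k0) Hv HM ?Hd // ?leq_addl //.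
Qed.

Lemma ext_mat (h : X -> {set X}) : mat (ext K h) = (mat (rK h))^T.
Proof.
rewrite mat_tr; apply: eq_mat => y; apply/setP => x; rewrite !inE /rK.
by case: (x \in K); rewrite ?inE.
Qed.

Lemma lin_rK (h : X -> {set X}) (c : {set X}) : c \subset K -> lin h c = lin (rK h) c.
Proof. by move=> Hc; apply: lin_ext => x Hx; rewrite /rK (subsetP Hc _ Hx). Qed.

Lemma main1 (c : {set X}) : c \subset K ->
  stable_limit (Phi K w) c (lin (ext K g) (lin f c)).
Proof.
move=> Hc; change (stable_limit (lin phi) c (lin (ext K g) (lin f c))).
have Halg := alg A_PN AsT PT PP Nnil PNP FA FP GAs GP.
apply: (@limit phi ((mat (rK g))^T * mat (rK f)) c _ ((size w).+1 + (size w).+1)%N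
          phi_K Hc Halg).
by rewrite vec_lin ext_mat (lin_rK f Hc) vec_lin mulmxA mulmxE.
Qed.

Lemma main2 (c : {set X}) : c \subset K ->
  stable_limit (Phis K w) c (lin (ext K f) (lin g c)).
Proof.
move=> Hc; change (stable_limit (lin phis) c (lin (ext K f) (lin g c))).
have HA2 : mat (rK phis) = mat pk + (mat nk)^T by rewrite AsT A_PN linearD /= PT.
have HAs2 : mat (rK phi) = (mat (rK phis))^T by rewrite AsT trmxK.
have HN2 : ((mat nk)^T) ^+ (size w).+1 = 0 by rewrite -trX Nnil trmx0.
have HPN2 a : mat pk * ((mat nk)^T) ^+ a.+1 * mat pk = 0.
  have := congr1 trmx (PNP a); rewrite trmx0 -!mulmxE !trmx_mul !mulmxE PT trX mulrA.
  by [].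
have Halg := alg HA2 HAs2 PT PP HN2 HPN2 GAs GP FA FP.
apply: (@limit phis ((mat (rK f))^T * mat (rK g)) c _ ((size w).+1 + (size w).+1)%N
          phis_K Hc Halg).
by rewrite vec_lin ext_mat (lin_rK g Hc) vec_lin mulmxA mulmxE.
Qed.

End Comb.

Theorem theorem13 (V : finType) (K : {set {set V}}) (w : seq (step V))
    (f g : {set V} -> {set {set V}}) :
  is_complex K -> morse_seq K w ->
  is_reference K w f -> is_coreference K w g ->
  forall (p : nat) (c : {set {set V}}), c \subset Kp K p ->
    stable_limit (Phi K w) c (lin (ext K g) (lin f c)) /\
    stable_limit (Phis K w) c (lin (ext K f) (lin g c)).
Proof.
move=> HK Hm Hf Hg p c Hc.
have HcK : c \subset K.
  by apply: subset_trans Hc _; apply/subsetP => x; rewrite inE => /andP [].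
split; [exact: (main1 HK Hm Hf Hg HcK) | exact: (main2 HK Hm Hf Hg HcK)].
Qed.
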